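(* Let $g,\gamma \ge 0$ be integers and let ${\rm T}$ be a $(3,\gamma)$-hyperelliptic numerical semigroup of genus $g$, with $u_1 := u_1({\rm T})$. Then $\#{\rm T}_{3-(u_1)_3} \leq \gamma + \lceil \frac{\chi}{3}\rceil$, where $\chi := u_1 - g + 3\gamma - 1 - \lfloor \frac{(g)_3}{2}\rfloor$.
   Context: A numerical semigroup is a submonoid ${\rm S}\subseteq\mathbb{N}$ with finite complement; its genus is $\#(\mathbb{N}\setminus{\rm S})$. For an integer $u$, $(u)_3$ denotes its residue modulo 3 in $\{0,1,2\}$. Let $[2g]=\{1,\dots,2g\}$, ${\rm T}^*={\rm T}\cap[2g]$, and ${\rm T}_i=\{t\in{\rm T}^*:(t)_3=i\}$ for $i\in\{0,1,2\}$. A numerical semigroup is $(3,\gamma)$-hyperelliptic if its first $\gamma$ positive elements are multiples of 3 with the $\gamma$-th equal to $6\gamma$, and $3(2\gamma+1)$ belongs to it. $u_1({\rm T}) := \min\{t \in {\rm T} : (t)_3 \neq 0\}$. *)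

(* Defs.v *)
From mathcomp Require Import all_boot all_order all_algebra.
Set Implicit Arguments. Unset Strict Implicit. Unset Printing Implicit Defensive.

Definition numerical_semigroup (S : nat -> bool) : Prop :=
  [/\ S 0,
      (forall a b, S a -> S b -> S (a + b)) &
      exists N, forall n, N <= n -> S n].

(* genus = #(N \ S): the number of gaps, counted below any bound N past
   which every integer lies in S. *)
Definition genus (S : nat -> bool) (g : nat) : Prop :=
  exists N, (forall n, N <= n -> S n) /\ count (fun n => ~~ S n) (iota 0 N) = g.

(* (3,gamma)-hyperelliptic: the first gamma positive elements of S are
   multiples of 3, the gamma-th one equals 6*gamma, and 3(2 gamma + 1) \in S. *)
Definition hyperelliptic3 (S : nat -> bool) (gamma : nat) : Prop :=
  [/\ S (6 * gamma),
      count S (iota 1 (6 * gamma)) = gamma,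
      (forall t, 1 <= t <= 6 * gamma -> S t -> t %% 3 = 0) &
      S (3 * (2 * gamma + 1))].

Definition is_u1 (S : nat -> bool) (u : nat) : Prop :=
  [/\ S u, u %% 3 != 0 & forall t, S t -> t %% 3 != 0 -> u <= t].

Definition cardTi (S : nat -> bool) (g i : nat) : nat :=
  count (fun t => S t && (t %% 3 == i)) (iota 1 (2 * g)).

(* ceiling of x / 3 for an integer x (intdiv's %/ by 3 is floor division) *)
Import GRing.Theory.
Definition ceil3 (x : int) : int := (- ((- x)%R %/ 3)%Z)%R.

(* Main.v *)
Require Import Defs.
From mathcomp Require Import all_boot all_order all_algebra.
From mathcomp Require Import zify.

Lemma cnt_split (p b : pred nat) s :
  count (fun x => p x && b x) s + count (fun x => ~~ p x && b x) s = count b s.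
Proof. elim: s => //= x s IH. rewrite -IH. by case: (p x); case: (b x) => /=; lia. Qed.

Lemma cnt_split3 (p : pred nat) s :
  count p s = count (fun x => p x && (x %% 3 == 0)) s +
   count (fun x => p x && (x %% 3 == 1)) s + count (fun x => p x && (x %% 3 == 2)) s.
Proof.
elim: s => //= x s ->. have: x %% 3 < 3 by rewrite ltn_mod.
case: (p x) => /=; last lia.
case E: (x %% 3) => [|[|[|k]]] //= _; lia.
Qed.

Lemma cnt3 (i : nat) n : i < 3 -> count (fun x => x %% 3 == i) (iota 0 n) = (n + 2 - i) %/ 3.
Proof.
move=> Hi; elim: n => [|n IH]; first by case: i Hi => [|[|[|]]].
rewrite -[X in iota _ X]addn1 iotaD count_cat IH /= add0n addn0.
case: eqP => H /=; lia.
Qed.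

Lemma cnt_iota (p : pred nat) a n : count p (iota a n) = count p (iota 0 (a+n)) - count p (iota 0 a).
Proof. by rewrite iotaD count_cat addKn. Qed.

Lemma count0_in (p : pred nat) s : {in s, forall x, ~~ p x} -> count p s = 0.
Proof. move=> H; rewrite (@eq_in_count _ _ pred0) ?count_pred0 // => x /H; by case: (p x). Qed.

Lemma count_all_in (p : pred nat) s : {in s, forall x, p x} -> count p s = size s.
Proof. move=> H; rewrite (@eq_in_count _ _ predT) ?count_predT // => x /H; by case: (p x). Qed.

Lemma sub_count_in (a b : pred nat) s : {in s, forall y, a y -> b y} -> count a s <= count b s.
Proof.
elim: s => //= y s IH H. apply: leq_add; last by apply: IH => z zs; apply: H; rewrite inE zs orbT.
case: (a y) (H y (mem_head _ _)) => //= ->; done.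
Qed.

Lemma pairing (S : nat -> bool) x : (forall a b, S a -> S b -> S (a+b)) -> ~~ S x ->
  count S (iota 0 x.+1) <= count (fun y => ~~ S y) (iota 0 x.+1).
Proof.
move=> Hc Hx.
have E: map (fun y => x - y) (iota 0 x.+1) = rev (iota 0 x.+1).
  apply: (@eq_from_nth _ 0); rewrite ?size_map ?size_rev // => i; rewrite size_iota => Hi.
  rewrite (nth_map 0) ?size_iota // nth_rev ?size_iota // !nth_iota //; lia.
rewrite -count_rev -E count_map. apply: sub_count_in => y; rewrite mem_iota => Hy /= Hs.
apply/negP => Hy'. move: (Hc _ _ Hs Hy'). rewrite subnK; last lia. by rewrite (negbTE Hx).
Qed.

Lemma reindex3 (T : nat -> bool) n : (forall t, 1 <= t <= 3*n -> T t -> t %% 3 = 0) ->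
  count (fun k => T (3*k)) (iota 1 n) = count T (iota 1 (3*n)).
Proof.
elim: n => [|n IH] H //.
rewrite -[X in iota _ X]addn1 iotaD count_cat.
rewrite (_ : 3 * n.+1 = 3 * n + 3); last lia.
rewrite [iota 1 (3*n+3)]iotaD count_cat.
rewrite IH; last by move=> t Ht; apply: H; lia.
congr (_ + _) => /=.
have H1: T (1 + 3 * n) = false.
  apply/negP => HT; have HH : (1 + 3*n) %% 3 = 0 by apply: H HT; lia.
  lia.
have H2: T (1 + 3 * n).+1 = false.
  apply/negP => HT; have HH : (1 + 3*n).+1 %% 3 = 0 by apply: H HT; lia.
  lia.
rewrite H1 H2 (_ : 3 * (1 + n) = (1 + 3*n).+2) //; lia.
Qed.

Lemma mult3 (T : nat -> bool) gamma :
  T 0 -> (forall a b, T a -> T b -> T (a + b)) -> hyperelliptic3 T gamma ->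
  forall k, 2 * gamma <= k -> T (3 * k).
Proof.
move=> H0 Hc [H6 Hcnt Hmod H7] k.
elim/ltn_ind: k => j IH Hg.
case: (leqP j (2 * gamma).+1) => Hj2.
  have [->|->] : j = 2 * gamma \/ j = (2 * gamma).+1 by lia.
    by move: H6; rewrite mulnA.
  by move: H7; rewrite addn1.
apply/negPn/negP => Hn.
set S := fun k => T (3 * k).
have Sc : forall a b, S a -> S b -> S (a + b) by move=> a b; rewrite /S mulnDr; apply: Hc.
have P := @pairing S j Sc Hn.
have := count_predC S (iota 0 j.+1). rewrite size_iota.
have E2 : forall s, count (predC S) s = count (fun y => ~~ S y) s by [].
rewrite E2.
have E: iota 0 j.+1 = iota 0 1 ++ iota 1 (2*gamma) ++ iota (1 + 2*gamma) (j - 2*gamma - 1) ++ iota j 1.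
  rewrite -[X in iota _ X](_ : 1 + (2*gamma + ((j-2*gamma-1) + 1)) = j.+1); last lia.
  rewrite iotaD add0n iotaD iotaD. by rewrite (_ : 1 + 2 * gamma + (j - 2 * gamma - 1) = j); last lia.
rewrite E !count_cat /= /S muln0 H0 (negbTE Hn).
rewrite reindex3; last by move=> t Ht; apply: Hmod; lia.
rewrite (_ : 3 * (2 * gamma) = 6 * gamma); last lia. rewrite Hcnt.
rewrite count_all_in ?size_iota; last first.
  move=> y; rewrite mem_iota => Hy; apply: IH; lia.
move: P. rewrite E !count_cat /= /S muln0 H0 (negbTE Hn).
rewrite reindex3; last by move=> t Ht; apply: Hmod; lia.
rewrite (_ : 3 * (2 * gamma) = 6 * gamma); last lia. rewrite Hcnt.
rewrite count_all_in ?size_iota; last first.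
  move=> y; rewrite mem_iota => Hy; apply: IH; lia.
simpl; lia.
Qed.
Local Open Scope ring_scope.

Theorem lemma2p2 (g gamma : nat) (T : nat -> bool) (u1 : nat) :
  numerical_semigroup T -> genus T g -> hyperelliptic3 T gamma -> is_u1 T u1 ->
  ((cardTi T g (3 - u1 %% 3))%:Z <=
     gamma%:Z + ceil3 (u1%:Z - g%:Z + 3 * gamma%:Z - 1 - ((g %% 3) %/ 2)%N%:Z))%R.
Proof.
move=> [H0 Hc _] [N [HN Hg]] Hh Hu.
have Hh' := Hh; case: Hh' => H6 Hcnt Hmod H7.
case: Hu => Tu Hr Hmin.
have M3 := @mult3 T gamma H0 Hc Hh.
have C0 : forall n, (n %% 3 = 0)%N -> (6*gamma <= n)%N -> T n.
  move=> n Hn Hn6. rewrite (divn_eq n 3) Hn addn0 mulnC. apply: M3. lia.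
pose M := (N + 2*g + u1 + 6*gamma + 10)%N.
have gM : count (fun n => ~~ T n) (iota 0 M) = g.
  rewrite (_ : M = N + (M - N))%N; last lia.
  rewrite iotaD count_cat Hg count0_in ?addn0 // => x; rewrite mem_iota => Hx.
  rewrite negbK; apply: HN; lia.
have gap2g : forall x, ~~ T x -> (x < 2*g)%N.
  move=> x Hx. have xN : (x < N)%N.
    case: (ltnP x N) => // /HN; by rewrite (negbTE Hx).
  have P := @pairing T x Hc Hx.
  have := count_predC T (iota 0 x.+1). rewrite size_iota.
  have E2 : forall s, count (predC T) s = count (fun y => ~~ T y) s by [].
  rewrite E2.
  have : (count (fun y => ~~ T y) (iota 0 x.+1) <= g)%N.
    rewrite -gM (_ : M = x.+1 + (M - x.+1))%N; last lia.
    by rewrite iotaD count_cat leq_addr.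
  lia.
have Sp := cnt_split3 (fun n => ~~ T n) (iota 0 M).
have B : count (fun n => ~~ T n && (n %% 3 == 0)%N) (iota 1 (6*gamma)) = gamma.
  have := cnt_split T (fun n => n %% 3 == 0)%N (iota 1 (6*gamma)).
  rewrite [X in _ = X]cnt_iota !cnt3 //.
  rewrite (@eq_in_count _ _ T); last first.
    move=> x; rewrite mem_iota => Hx. case Tx: (T x) => //=. apply/eqP; apply: Hmod => //; lia.
  rewrite Hcnt. lia.
have B1 : count (fun n => ~~ T n && (n %% 3 == 0)%N) (iota 0 (1 + 6*gamma)) = gamma.
  by rewrite iotaD count_cat /= H0 B.
have A0 : count (fun n => ~~ T n && (n %% 3 == 0)%N) (iota 0 M) = gamma.
  rewrite (_ : M = (1 + 6*gamma) + (M - (1 + 6*gamma)))%N; last lia.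
  rewrite iotaD count_cat B1 count0_in ?addn0 // => x; rewrite mem_iota => Hx.
  apply/negP => /andP [Hx1 /eqP Hx2]. by rewrite C0 in Hx1; [|lia|lia].
have Ar : (count (fun n => ~~ T n && (n %% 3 == u1 %% 3)%N) (iota 0 M) <= u1 %/ 3 + gamma)%N.
  rewrite (_ : M = u1 + (6*gamma + (M - u1 - 6*gamma)))%N; last lia.
  rewrite iotaD iotaD !count_cat add0n.
  rewrite [X in (_ + (_ + X) <= _)%N]count0_in; last first.
    move=> x; rewrite mem_iota => Hx.
    apply/negP => /andP [Hx1 /eqP Hx2].
    have : T (u1 + (x - u1))%N by apply: Hc => //; apply: C0; lia.
    rewrite subnKC ?(negbTE Hx1) //; lia.
  rewrite addn0. apply: leq_add.
    apply: (leq_trans (@sub_count_in _ (fun n => (n %% 3 == u1 %% 3)%N) _ _)).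
      by move=> y _ /andP [].
    rewrite cnt3; [lia | lia].
  rewrite -[X in iota X _](addn0 u1) iotaDl count_map.
  apply: (@leq_trans (count (fun n => ~~ T n && (n %% 3 == 0)%N) (iota 0 (6 * gamma)))); last first.
    rewrite -{2}B1. by rewrite addnC iotaD count_cat leq_addr.
    apply: sub_count_in => y _ /= /andP [Hy1 /eqP Hy2]. apply/andP; split; last lia.
    apply/negP => Ty; move/negP: Hy1; apply; exact: Hc.
have Ac : (cardTi T g (3 - u1 %% 3) + count (fun n => ~~ T n && (n %% 3 == 3 - u1 %% 3)%N) (iota 0 M)
           = (2 * g + 3 - (3 - u1 %% 3)) %/ 3)%N.
  rewrite (_ : M = 1 + (2*g + (M - 1 - 2*g)))%N; last lia.
  rewrite iotaD iotaD !count_cat /= H0 add0n.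
  rewrite [count _ (iota (1 + 2*g) _)]count0_in; last first.
    move=> x; rewrite mem_iota => Hx.
    apply/negP => /andP [Hx1 _]. have := gap2g _ Hx1; lia.
  rewrite addn0.
  have := cnt_split T (fun x => x %% 3 == 3 - u1 %% 3)%N (iota 1 (2*g)).
  rewrite /cardTi /= => E. idtac.
  rewrite add0n addn0 E cnt_iota !cnt3; lia.
rewrite gM A0 in Sp.
have Hr3 : (u1 %% 3 < 3)%N by rewrite ltn_mod.
have HS : (count (fun n => ~~ T n && (n %% 3 == u1 %% 3)%N) (iota 0 M) +
           count (fun n => ~~ T n && (n %% 3 == 3 - u1 %% 3)%N) (iota 0 M) =
           count (fun n => ~~ T n && (n %% 3 == 1)%N) (iota 0 M) +
           count (fun n => ~~ T n && (n %% 3 == 2)%N) (iota 0 M))%N.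
  have [E|E] : (u1 %% 3 = 1 \/ u1 %% 3 = 2)%N by lia.
    by rewrite E.
  by rewrite E addnC.
move: Ar Ac HS Sp.
set h := cardTi _ _ _.
set a := count _ (iota 0 M). set b := count _ (iota 0 M).
set a1 := count _ (iota 0 M). set a2 := count _ (iota 0 M).
move=> Ar Ac HS Sp.
rewrite /ceil3.
set X := (_ - _)%R.
have := divz_eq (- X) 3. have := modz_ge0 (- X) (isT : (3:int) != 0).
have := ltz_pmod (- X) (isT : (0:int) < 3).
move: (divz _ _) (modz _ _) => d m.
rewrite /X.
move=> *. lia.
Qed.
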